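(* Let $p$ be any prime, $G=SL(2,\mathbb{Z}_p)$ and $T=\{F\in SL(2,\mathbb{Z}_p):\mathrm{Tr}(F)\neq 2\pmod p\}$. Then the clique number of the Cayley graph $\Gamma(G,T)$ satisfies $\omega(\Gamma(G,T))\geq p(p-1)$.
   Context: The Cayley graph $\Gamma(G,T)$ has vertex set $G$ and an edge between $g_1,g_2$ iff $g_1^{-1}g_2\in T$; thus $F_1,F_2$ are adjacent iff $\mathrm{Tr}(F_1^{-1}F_2)\neq 2 \pmod p$. The clique number $\omega$ is the largest size of a set of pairwise adjacent vertices. *)

(* Defs.v *)
From mathcomp Require Import all_boot all_order all_algebra all_fingroup.
Set Implicit Arguments. Unset Strict Implicit. Unset Printing Implicit Defensive.
Import GRing.Theory.
Local Open Scope ring_scope.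

Definition SL2 (p : nat) : {set 'M['F_p]_2} := [set M : 'M['F_p]_2 | \det M == 1].

Definition Tset (p : nat) : {set 'M['F_p]_2} :=
  [set F in SL2 p | \tr F != 2%:R].

Definition cayley_adj (p : nat) (F1 F2 : 'M['F_p]_2) : bool :=
  (invmx F1 *m F2) \in Tset p.

Definition is_clique (p : nat) (S : {set 'M['F_p]_2}) : bool :=
  (S \subset SL2 p) &&
  [forall F1 in S, forall F2 in S, (F1 != F2) ==> cayley_adj F1 F2].

Definition clique_number (p : nat) : nat :=
  \max_(S : {set 'M['F_p]_2} | is_clique S) #|S|.

(* Main.v *)
Require Import Defs.
From mathcomp Require Import all_boot all_order all_algebra all_fingroup.
From mathcomp Require Import ring.
Import GRing.Theory.

Section Gen.
Local Open Scope ring_scope.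
Variable F : fieldType.

Lemma det22 (M : 'M[F]_2) : \det M = M 0 0 * M 1 1 - M 0 1 * M 1 0.
Proof.
rewrite (expand_det_row _ 0) !big_ord_recl big_ord0 /cofactor !det_mx11 !mxE /=.
have l1 : lift (0:'I_2) (ord0 : 'I_1) = 1 by apply/val_inj.
have l3 : lift (lift (ord0:'I_2) (ord0:'I_1)) (ord0 : 'I_1) = 0 by apply/val_inj.
rewrite l3 l1 /= expr0 expr1.
have -> : (ord0 : 'I_2) = 0 by [].
ring.
Qed.

Lemma tr22 (A B : 'M[F]_2) : \det A = 1 ->
  \tr (invmx A *m B) = A 1 1 * B 0 0 - A 0 1 * B 1 0 - A 1 0 * B 0 1 + A 0 0 * B 1 1.
Proof.
move=> dA.
have uA : A \in unitmx by rewrite unitmxE dA unitr1.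
rewrite /invmx uA dA invr1 scale1r /mxtrace !big_ord_recl !big_ord0 !mxE.
rewrite !big_ord_recl !big_ord0 !mxE /cofactor !det_mx11 !mxE /=.
have l1 : lift (ord0:'I_2) (ord0 : 'I_1) = 1 by apply/val_inj.
have l3 : lift (lift (ord0:'I_2) (ord0:'I_1)) (ord0 : 'I_1) = 0 by apply/val_inj.
rewrite l3 l1 /= expr0 expr1 !addr0.
have -> : (ord0 : 'I_2) = 0 by [].
have -> : (bump 0 0 + bump 0 0 = 2)%N by []. rewrite expr2 mulrNN mul1r; ring.
Qed.

Lemma tr_det22 (A B : 'M[F]_2) : \det A = 1 -> \det B = 1 ->
  \tr (invmx A *m B) = 2%:R - \det (A - B).
Proof.
move=> dA dB; rewrite tr22 // det22 !mxE.
move: dA dB; rewrite !det22 => dA dB.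
have -> : (2%:R : F) = \det A + \det B by rewrite !det22 dA dB.
rewrite !det22; ring.
Qed.

End Gen.

Local Open Scope ring_scope.

Lemma adj_of (p : nat) (A B : 'M['F_p]_2) : \det A = 1 -> \det B = 1 ->
  \det (A - B) != 0 -> cayley_adj A B.
Proof.
move=> dA dB dAB; rewrite /cayley_adj /Tset /SL2 !inE.
rewrite det_mulmx det_inv dA dB invr1 mulr1 eqxx /=.
rewrite tr_det22 // -subr_eq0 addrAC subrr sub0r oppr_eq0 //.
Qed.

Lemma clique_le (p : nat) (S : {set 'M['F_p]_2}) : is_clique S -> (#|S| <= clique_number p)%N.
Proof. move=> H; exact: (@leq_bigmax_cond _ (fun S => is_clique S) (fun S => #|S|) S H). Qed.

Lemma nonsquare (p : nat) (hp : prime p) : p != 2%N -> exists r : 'F_p, forall x : 'F_p, x ^+ 2 != r.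
Proof.
move=> hp2.
have n11 : (1 : 'F_p) != -1.
  apply/negP => /eqP H.
  have : (2%:R : 'F_p) == 0 by rewrite -[2%N]/(1+1)%N natrD {2}H subrr.
  rewrite -(dvdn_pcharf (pchar_Fp hp)) => /(dvdn_leq (isT : (0 < 2)%N)).
  have := prime_gt1 hp. move: hp2; clear; case: p => [|[|[|q]]] //.
have [/existsP [r /forallP Hr]|] := boolP [exists r : 'F_p, [forall x : 'F_p, x ^+ 2 != r]].
  by exists r.
rewrite negb_exists => /forallP H.
have H' : forall y : 'F_p, exists x : 'F_p, x ^+ 2 == y.
  move=> y; have := H y; rewrite negb_forall => /existsP [x]; rewrite negbK => hx.
  by exists x.
pose g (y : 'F_p) := odflt 0 [pick x | x ^+ 2 == y].
have gK : forall y, g y ^+ 2 = y.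
  move=> y; rewrite /g; case: pickP => [x /eqP //|].
  by case: (H' y) => x hx /(_ x); rewrite hx.
have ginj : injective g by move=> y1 y2 e; rewrite -(gK y1) -(gK y2) e.
case: (injF_bij ginj) => h hg gh.
have e1 : g (h 1) = 1 by rewrite gh.
have e2 : g (h (-1)) = -1 by rewrite gh.
have : h 1 = h (-1).
  by rewrite -(gK (h 1)) -(gK (h (-1))) e1 e2 sqrrN.
by move/(congr1 g); rewrite e1 e2 => /eqP; rewrite (negbTE n11).
Qed.

Definition fmat (p : nat) (r : 'F_p) (x : 'F_p * 'F_p) : 'M['F_p]_2 :=
  \matrix_(i < 2, j < 2)
    if i == 0 then (if j == 0 then x.1 else x.2)
    else (if j == 0 then - r * x.2 else (1 - r * x.2 ^+ 2) / x.1).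
Arguments fmat {p}.

Lemma fmat_det (p : nat) (r : 'F_p) (x : 'F_p * 'F_p) : x.1 != 0 -> \det (fmat r x) = 1.
Proof.
move=> h; rewrite det22 !mxE /=; field; exact: h.
Qed.

Lemma fmat_diff (p : nat) (r : 'F_p) (x y : 'F_p * 'F_p) : (forall z : 'F_p, z ^+ 2 != r) ->
  x.1 != 0 -> y.1 != 0 -> x != y -> \det (fmat r x - fmat r y) != 0.
Proof.
case: x => a b; case: y => a' b' Hr /= ha ha' nxy.
rewrite det22 !mxE /=.
set D := (X in X != 0).
have eD : D * (a * a') = r * (a * b' - a' * b) ^+ 2 - (a - a') ^+ 2.
  rewrite /D; field; apply/andP; split => //.
apply/negP => /eqP D0; move: eD; rewrite D0 mul0r => /eqP; rewrite eq_sym subr_eq0 => /eqP e.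
have [z0|nz] := eqVneq (a * b' - a' * b) 0.
  move: e; rewrite z0 expr0n mulr0 => /eqP; rewrite eq_sym sqrf_eq0 subr_eq0 => /eqP eaa.
  subst a'; move: z0; rewrite -mulrBr => /eqP; rewrite mulf_eq0 (negbTE ha) /= subr_eq0 => /eqP ebb.
  by subst b'; rewrite eqxx in nxy.
move: (Hr ((a - a') / (a * b' - a' * b))); rewrite expr_div_n -e mulfK ?eqxx //.
by rewrite sqrf_eq0.
Qed.

Arguments fmat_diff {p r x y}.
Arguments fmat_det {p r x}.
Arguments adj_of {p A B}.

Lemma main_aux (p : nat) (hp : prime p) :
  (p * (p - 1) <= clique_number p)%N.
Proof.
have [->|hp2] := eqVneq p 2%N.
  pose M : 'M['F_2]_2 := \matrix_(i<2,j<2) if (i == 0) && (j == 0) then 0 else 1.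
  have dM : \det M = 1 by rewrite det22 !mxE /= mul0r mul1r sub0r; apply/val_inj.
  have d1 : \det (1 : 'M['F_2]_2) = 1 by rewrite det1.
  have dd1 : \det (1 - M) != 0 by rewrite det22 !mxE /=.
  have dd2 : \det (M - 1) != 0 by rewrite det22 !mxE /=.
  have n1M : (1 : 'M['F_2]_2) != M.
    by apply/eqP => /matrixP /(_ 0 0); rewrite !mxE /=.
  apply: (leq_trans _ (@clique_le 2 [set 1; M] _)); first by rewrite cards2 n1M.
  apply/andP; split.
    by apply/subsetP => x; rewrite !inE => /orP [] /eqP ->; rewrite ?d1 ?dM.
  apply/forallP => x; apply/implyP => hx; apply/forallP => y; apply/implyP => hy.
  apply/implyP => nxy.
  move: hx hy nxy; rewrite !inE => /orP [] /eqP -> /orP [] /eqP ->;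
    rewrite ?eqxx // => _; exact: adj_of.
have [r Hr] := @nonsquare p hp hp2.
pose D := setX [set~ (0 : 'F_p)] [set: 'F_p].
have inD : forall x, (x \in D) = (x.1 != 0) by move=> x; rewrite !inE andbT.
pose S := fmat r @: D.
have cD : #|D| = (p.-1 * p)%N by rewrite cardsX cardsC1 cardsT card_Fp.
have cS : #|S| = #|D|.
  apply: card_in_imset => x y hx hy e; apply/eqP; apply/negP => /negP nxy.
  have hx1 : x.1 != 0 by rewrite -inD.
  have hy1 : y.1 != 0 by rewrite -inD.
  by move: (fmat_diff Hr hx1 hy1 nxy); rewrite e subrr det0 eqxx.
apply: leq_trans (@clique_le p S _); first by rewrite cS cD mulnC subn1.
apply/andP; split.
  apply/subsetP => F /imsetP [x hx ->]; rewrite inE fmat_det //; by rewrite -inD.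
apply/forallP => F1; apply/implyP => /imsetP [x hx ->].
apply/forallP => F2; apply/implyP => /imsetP [y hy ->]; apply/implyP => nxy.
have nxy' : x != y by apply: contraNneq nxy => ->.
have hx1 : x.1 != 0 by rewrite -inD.
have hy1 : y.1 != 0 by rewrite -inD.
by apply: adj_of; rewrite ?fmat_det //; apply: fmat_diff.
Qed.

Local Close Scope ring_scope.

Theorem mainTheorem3 (p : nat) (hp : prime p) :
  p * (p - 1) <= clique_number p.
Proof. exact: main_aux. Qed.
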